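(* Let $G$ be a group with a gliding system $(\mathcal{G},\mathcal{I})$ such that there is an upper bound on the cardinality of sets of pairwise independent glides. Let $\mathcal{D}\subset G$ be an oriented regular set satisfying the square condition. Then for every $A\in\mathcal{D}$ the typing homomorphism $\mu_A:\pi_1(X_{\mathcal{D}},A)\to\mathcal{A}(G)$ is injective.
   Context: Gliding system $(\mathcal{G},\mathcal{I})$ in $G$: $\mathcal{G}\subset G\setminus\{1\}$ closed under inversion (glides), $\mathcal{I}\subset\mathcal{G}\times\mathcal{G}$ (independence) with $(s^{-1},t),(t,s)\in\mathcal{I}$ and $st=ts\ne1$ whenever $(s,t)\in\mathcal{I}$. Pre-cubic set: finite set $S$ of pairwise independent glides, $[S]=\prod_{s\in S}s$; cubic: pre-cubic with $[T_1]\ne[T_2]$ for distinct $T_1,T_2\subset S$. Glide complex $X_G$: cubed complex with one $k$-cube for each equivalence class of based cubes $(A,S)$ ($A\in G$, $S$ cubic of size $k$) under $(A,S)\sim([T]A,(S\setminus T)\cup\{t^{-1}:t\in T\})$; vertices $[T]A$, faces the cubes of $(A,S')$, $S'\subset S$; in particular 1-cells join $A$ and $sA$ for glides $s$. $X_{\mathcal{D}}$: subcomplex of cubes all of whose vertices lie in $\mathcal{D}$. $\mathcal{D}$ is regular if for every $A\in\mathcal{D}$ every pre-cubic $S$ with $sA\in\mathcal{D}$ ($s\in S$) and $stA\in\mathcal{D}$ (distinct $s,t\in S$) is cubic. Square condition: for $A\in\mathcal{D}$ and independent $s,t$ with $sA,tA\in\mathcal{D}$, $stA\in\mathcal{D}$.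 $\mathcal{A}(G)$ is the right-angled Artin group with generators $g_s$ ($s\in\mathcal{G}$) and relations $g_sg_t=g_tg_s$ for $(s,t)\in\mathcal{I}$. An orientation of $\mathcal{D}$ is a choice of direction of every 1-cell of $X_{\mathcal{D}}$ such that for every square with vertices $A,sA,tA,stA\in\mathcal{D}$ ($s,t$ independent), the 1-cells $A$–$sA$ and $tA$–$stA$ are either both directed towards $sA,stA$ or both towards $A,tA$ (and the same with $s,t$ exchanged); $\mathcal{D}$ is oriented if an orientation is fixed. For a 1-cell $e$ directed from $A$ to $B$ set $|e|=BA^{-1}\in\mathcal{G}$. For an edge path $\alpha$ through consecutive 1-cells $e_1,\dots,e_n$, with $\nu_k=+1$ if the path traverses $e_k$ along its orientation and $-1$ otherwise, put $\mu(\alpha)=g_{|e_1|}^{\nu_1}\cdots g_{|e_n|}^{\nu_n}$; this is invariant under homotopy rel endpoints and defines the typing homomorphism $\mu_A:\pi_1(X_{\mathcal{D}},A)\to\mathcal{A}(G)$. *)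

(* Defs.v *)
From Stdlib Require Import List.
Import ListNotations.
Set Implicit Arguments.

Record group := Group {
  carrier :> Type;
  mul : carrier -> carrier -> carrier;
  one : carrier;
  inv : carrier -> carrier;
  mulA : forall x y z, mul x (mul y z) = mul (mul x y) z;
  mul1g : forall x, mul one x = x;
  mulVg : forall x, mul (inv x) x = one
}.

Arguments mul {g}. Arguments inv {g}. Arguments one {g}.

Section Glide.
Context {G : group}.
Local Notation "x * y" := (mul x y).

Definition gliding_system (glide : G -> Prop) (I : G -> G -> Prop) : Prop :=
  ~ glide (one (g:=G)) /\
  (forall s, glide s -> glide (inv s)) /\
  (forall s t, I s t -> glide s /\ glide t) /\
  (forall s t, I s t -> I (inv s) t /\ I t s) /\
  (forall s t, I s t -> s * t = t * s /\ s * t <> @one G).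

(* Finite sets of glides are represented by duplicate-free lists. *)
Definition pairwise_indep (I : G -> G -> Prop) (S : list G) : Prop :=
  forall s t, In s S -> In t S -> s <> t -> I s t.

Definition pre_cubic (glide : G -> Prop) (I : G -> G -> Prop) (S : list G) : Prop :=
  NoDup S /\ (forall s, In s S -> glide s) /\ pairwise_indep I S.

Definition prodl (S : list G) : G := fold_right (@mul G) (one (g:=G)) S.

(* Subsets of S given by bit masks. *)
Fixpoint maskl (m : list bool) (S : list G) : list G :=
  match m, S with
  | b :: m', x :: S' => if b then x :: maskl m' S' else maskl m' S'
  | _, _ => []
  end.

Definition cubic glide I (S : list G) : Prop :=
  pre_cubic glide I S /\
  forall m1 m2 : list bool, length m1 = length S -> length m2 = length S ->
    m1 <> m2 -> prodl (maskl m1 S) <> prodl (maskl m2 S).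

Definition bounded_independence glide I : Prop :=
  exists N : nat, forall S, pre_cubic glide I S -> length S <= N.

Definition regular glide I (D : G -> Prop) : Prop :=
  forall A, D A -> forall S, pre_cubic glide I S ->
    (forall s, In s S -> D (s * A)) ->
    (forall s t, In s S -> In t S -> s <> t -> D (s * (t * A))) ->
    cubic glide I S.

Definition square_condition (I : G -> G -> Prop) (D : G -> Prop) : Prop :=
  forall A s t, D A -> I s t -> D (s * A) -> D (t * A) -> D (s * (t * A)).

(* 1-cells of X_D: A -- B with B A^-1 a glide, both endpoints in D. *)
Definition edge glide (D : G -> Prop) (A B : G) : Prop :=
  D A /\ D B /\ glide (B * inv A).

(* 2-cells of X_D: squares A, sA, tA, stA with {s,t} cubic. *)
Definition square_in (I : G -> G -> Prop) (D : G -> Prop) (A s t : G) : Prop :=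
  I s t /\ s <> t /\ D A /\ D (s * A) /\ D (t * A) /\ D (s * (t * A)).

(* Orientation: o A B = true means the 1-cell {A,B} is directed from A to B. *)
Definition orientation glide I (D : G -> Prop) (o : G -> G -> bool) : Prop :=
  (forall A B, edge glide D A B -> o A B = negb (o B A)) /\
  (forall A s t, square_in I D A s t ->
     o A (s * A) = o (t * A) (s * (t * A)) /\
     o A (t * A) = o (s * A) (t * (s * A))).

(* Edge paths as lists of vertices. *)
Fixpoint is_path glide (D : G -> Prop) (p : list G) : Prop :=
  match p with
  | [] => False
  | [A] => D A
  | A :: ((B :: _) as q) => edge glide D A B /\ is_path glide D q
  end.

Definition loop_at glide D (A : G) (p : list G) : Prop :=
  is_path glide D p /\ hd A p = A /\ last p A = A.

(* Homotopy rel endpoints of edge paths in (the 2-skeleton of) X_D. *)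
Inductive htpy glide I (D : G -> Prop) : list G -> list G -> Prop :=
| ht_refl p : htpy glide I D p p
| ht_sym p q : htpy glide I D p q -> htpy glide I D q p
| ht_trans p q r : htpy glide I D p q -> htpy glide I D q r -> htpy glide I D p r
| ht_back u v A B : edge glide D A B ->
    htpy glide I D (u ++ A :: B :: A :: v) (u ++ A :: v)
| ht_square u v A s t : square_in I D A s t ->
    htpy glide I D (u ++ A :: (s * A) :: (s * (t * A)) :: v)
                   (u ++ A :: (t * A) :: (s * (t * A)) :: v).

(* Words in the generators g_s^{+-1} of the RAAG A(G): (s, true) = g_s,
   (s, false) = g_s^{-1}. *)
Definition word := list (G * bool).

(* Equality in A(G) = <g_s (s glide) | g_s g_t = g_t g_s for (s,t) in I>. *)
Inductive raag_eq (I : G -> G -> Prop) : word -> word -> Prop :=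
| re_refl w : raag_eq I w w
| re_sym w w' : raag_eq I w w' -> raag_eq I w' w
| re_trans w1 w2 w3 : raag_eq I w1 w2 -> raag_eq I w2 w3 -> raag_eq I w1 w3
| re_cancel u v s b : raag_eq I (u ++ (s, b) :: (s, negb b) :: v) (u ++ v)
| re_comm u v s t : I s t ->
    raag_eq I (u ++ (s, true) :: (t, true) :: v) (u ++ (t, true) :: (s, true) :: v).

(* The letter g_{|e|}^{nu} for traversing the 1-cell e from A to B. *)
Definition letter (o : G -> G -> bool) (A B : G) : G * bool :=
  if o A B then (B * inv A, true) else (A * inv B, false).

Fixpoint mu (o : G -> G -> bool) (p : list G) : word :=
  match p with
  | A :: ((B :: _) as q) => letter o A B :: mu o q
  | _ => []
  end.

End Glide.

(* Main.v *)
Require Import Defs.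
From Stdlib Require Import List Relations Classical ClassicalEpsilon Bool.
Import ListNotations.
Arguments mulA {g}. Arguments mul1g {g}. Arguments mulVg {g}.

Lemma mulKg {G : group} (x y : G) : mul (inv x) (mul x y) = y.
Proof. rewrite mulA, mulVg, mul1g. reflexivity. Qed.

Lemma mulg_cancl {G : group} (x y z : G) : mul x y = mul x z -> y = z.
Proof. intro H. rewrite <- (mulKg x y), <- (mulKg x z), H. reflexivity. Qed.

Lemma mulgV {G : group} (x : G) : mul x (inv x) = one.
Proof.
  set (e := mul x (inv x)).
  assert (He : mul e e = e).
  { unfold e. rewrite <- mulA. rewrite (mulA (inv x) x (inv x)), mulVg, mul1g. reflexivity. }
  rewrite <- (mulKg e e). rewrite He. apply mulVg.
Qed.

Lemma mulg1 {G : group} (x : G) : mul x one = x.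
Proof. rewrite <- (mulVg x), mulA, mulgV, mul1g. reflexivity. Qed.

Lemma mulgK {G : group} (x y : G) : mul (mul y x) (inv x) = y.
Proof. rewrite <- mulA, mulgV, mulg1. reflexivity. Qed.

Lemma mulgKV {G : group} (x y : G) : mul (mul y (inv x)) x = y.
Proof. rewrite <- mulA, mulVg, mulg1. reflexivity. Qed.

Lemma mulg_cancr {G : group} (x y z : G) : mul y x = mul z x -> y = z.
Proof. intro H. rewrite <- (mulgK x y), <- (mulgK x z), H. reflexivity. Qed.

Lemma invK {G : group} (x : G) : inv (inv x) = x.
Proof. apply (mulg_cancr (inv x)). rewrite mulVg, mulgV. reflexivity. Qed.

Lemma invM {G : group} (x y : G) : inv (mul x y) = mul (inv y) (inv x).
Proof.
  apply (mulg_cancl (mul x y)). rewrite mulgV.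
  rewrite <- mulA, (mulA y (inv y)), mulgV, mul1g, mulgV. reflexivity.
Qed.

Lemma inv_div {G : group} (a b : G) : inv (mul a (inv b)) = mul b (inv a).
Proof. rewrite invM, invK. reflexivity. Qed.

Hint Rewrite <- app_assoc : lst.
Hint Rewrite app_nil_r : lst.
Ltac leq := subst; repeat progress (simpl; autorewrite with lst); try reflexivity.

Definition flip {G : group} (x : G * bool) : G * bool := (fst x, negb (snd x)).
Definition comm {G : group} (I : G -> G -> Prop) (x y : G * bool) : Prop := I (fst x) (fst y).

Lemma flip_flip {G : group} (x : G * bool) : flip (flip x) = x.
Proof. destruct x as [a b]; unfold flip; simpl; rewrite negb_involutive; reflexivity. Qed.

Definition removable {G : group} I (x : G * bool) t r q :=
  t = r ++ flip x :: q /\ Forall (comm I x) r.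

Definition swap_step {G : group} I (w w' : list (G * bool)) : Prop :=
  exists u v a b, comm I a b /\ w = u ++ a :: b :: v /\ w' = u ++ b :: a :: v.

Definition equiv {G : group} I := clos_refl_trans _ (@swap_step G I).

Definition reduced {G : group} I (t : list (G * bool)) : Prop :=
  forall u z m v, t = u ++ z :: m ++ flip z :: v -> ~ Forall (comm I z) m.

Definition f {G : group} I (x : G * bool) (t : list (G * bool)) : list (G * bool) :=
  match excluded_middle_informative
          (exists rq : list (G*bool) * list (G*bool), removable I x t (fst rq) (snd rq)) with
  | left H => let rq := proj1_sig (constructive_indefinite_description _ H) in fst rq ++ snd rq
  | right _ => x :: t
  end.

Lemma app_cons_uniq {A} (c : A) r1 q1 r2 q2 :
  ~ In c r1 -> ~ In c r2 -> r1 ++ c :: q1 = r2 ++ c :: q2 -> r1 = r2 /\ q1 = q2.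
Proof.
  revert r2. induction r1 as [|a r1 IH]; intros [|b r2] H1 H2 E; simpl in *.
  - inversion E; auto.
  - inversion E; subst. exfalso; auto.
  - inversion E; subst. exfalso; auto.
  - inversion E; subst. destruct (IH r2) as [-> ->]; auto.
Qed.

Section S.
Context {G : group} (I : G -> G -> Prop)
  (Iirr : forall s, ~ I s s) (Isym : forall s t, I s t -> I t s).

Lemma comm_sym x y : comm I x y -> comm I y x.
Proof. unfold comm; auto. Qed.

Lemma Forall_notin x r : Forall (comm I x) r -> ~ In (flip x) r.
Proof.
  intros HF Hin. rewrite Forall_forall in HF. apply HF in Hin.
  unfold comm, flip in Hin; simpl in Hin. exact (Iirr _ Hin).
Qed.

Lemma rem_uniq x t r q r' q' :
  removable I x t r q -> removable I x t r' q' -> r = r' /\ q = q'.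
Proof.
  intros [E HF] [E' HF']. subst. apply app_cons_uniq with (c := flip x); auto;
  apply Forall_notin; auto.
Qed.

Lemma f_rem x t r q : removable I x t r q -> f I x t = r ++ q.
Proof.
  intro H. unfold f. destruct excluded_middle_informative as [H1|H1].
  - destruct (constructive_indefinite_description _ H1) as [[r' q'] H']. simpl in *.
    destruct (rem_uniq _ _ _ _ _ _ H H') as [-> ->]. reflexivity.
  - exfalso. apply H1. exists (r, q). exact H.
Qed.

Lemma f_norem x t : (forall r q, ~ removable I x t r q) -> f I x t = x :: t.
Proof.
  intro H. unfold f. destruct excluded_middle_informative as [H1|H1]; auto.
  exfalso. destruct H1 as [[r q] Hr]. exact (H _ _ Hr).
Qed.

Lemma rem_dec x t : (exists r q, removable I x t r q) \/ (forall r q, ~ removable I x t r q).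
Proof.
  destruct (classic (exists r q, removable I x t r q)) as [H|H]; auto.
  right. intros r q Hr. apply H. eauto.
Qed.

Lemma equiv_refl w : equiv I w w.
Proof. apply rt_refl. Qed.
Lemma equiv_trans w1 w2 w3 : equiv I w1 w2 -> equiv I w2 w3 -> equiv I w1 w3.
Proof. apply rt_trans. Qed.
Lemma swap_sym w w' : swap_step I w w' -> swap_step I w' w.
Proof. intros (u & v & a & b & H & -> & ->). exists u, v, b, a. split; auto. apply comm_sym; auto. Qed.
Lemma equiv_sym w w' : equiv I w w' -> equiv I w' w.
Proof.
  induction 1. apply rt_step, swap_sym; auto. apply rt_refl. eapply rt_trans; eauto.
Qed.
Lemma swap_app_l u w w' : swap_step I w w' -> swap_step I (u ++ w) (u ++ w').
Proof. intros (u' & v & a & b & H & -> & ->). exists (u ++ u'), v, a, b. split; auto. split; leq. Qed.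
Lemma equiv_app_l u w w' : equiv I w w' -> equiv I (u ++ w) (u ++ w').
Proof.
  induction 1. apply rt_step, swap_app_l; auto. apply rt_refl. eapply rt_trans; eauto.
Qed.
Lemma equiv_step u v a b : comm I a b -> equiv I (u ++ a :: b :: v) (u ++ b :: a :: v).
Proof. intro H. apply rt_step. exists u, v, a, b. auto. Qed.

Lemma equiv_move c p q : Forall (comm I c) p -> equiv I (c :: p ++ q) (p ++ c :: q).
Proof.
  induction p as [|a p IH]; intro HF; simpl. apply equiv_refl.
  inversion HF; subst. eapply equiv_trans.
  - apply (equiv_step [] (p ++ q) c a). auto.
  - simpl. apply (equiv_app_l [a]). auto.
Qed.

Lemma reduced_nil : reduced I [].
Proof. intros u z m v E. destruct u; discriminate. Qed.

Lemma reduced_f x t : reduced I t -> reduced I (f I x t).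
Proof.
  intro Hred. destruct (rem_dec x t) as [(r & q & Hr)|Hn].
  - rewrite (f_rem _ _ _ _ Hr). destruct Hr as [Et HF]. subst t.
    intros u z m v E Hm.
    apply app_eq_app in E as [l [[E1 E2]|[E1 E2]]].
    + destruct l as [|a l'].
      * simpl in E2. subst. apply (Hred (u ++ [flip x]) z m v); try leq; auto.
      * simpl in E2. injection E2 as Ea E2; subst a.
        apply app_eq_app in E2 as [k [[F1 F2]|[F1 F2]]].
        -- subst. apply (Hred u z (l' ++ flip x :: k) v); try leq.
           apply Forall_app in Hm as [Hm1 Hm2]. apply Forall_app; split; auto.
           constructor; auto. apply Forall_app in HF as [_ HF]. inversion HF; subst.
           unfold comm, flip in *; simpl in *. auto.
        -- destruct k as [|b k'].
           ++ simpl in F2. subst. apply (Hred u z (m ++ [flip x]) v); try leq.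
              apply Forall_app; split; auto. constructor; auto.
              apply Forall_app in HF as [_ HF]. inversion HF; subst.
              unfold comm, flip in *; simpl in *. auto.
           ++ simpl in F2. injection F2 as Eb F2; subst b; subst.
              apply (Hred u z m (k' ++ flip x :: q)); try leq; auto.
    + subst. apply (Hred (r ++ flip x :: l) z m v); try leq; auto.
  - rewrite (f_norem _ _ Hn). intros u z m v E Hm.
    destruct u as [|a u']; simpl in E; injection E as E1 E2.
    + subst z. apply (Hn m v). split; try rewrite flip_flip; auto.
    + exact (Hred u' z m v E2 Hm).
Qed.

Lemma f_cancel x t : reduced I t -> equiv I (f I (flip x) (f I x t)) t.
Proof.
  intro Hred. destruct (rem_dec x t) as [(r & q & Hr)|Hn].
  - rewrite (f_rem _ _ _ _ Hr). destruct Hr as [Et HF].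
    assert (Hn : forall r' q', ~ removable I (flip x) (r ++ q) r' q').
    { intros r' q' [E HF']. rewrite flip_flip in E.
      apply app_eq_app in E as [l [[E1 E2]|[E1 E2]]].
      - destruct l as [|a l'].
        + simpl in E2. subst. refine (Hred r' (flip x) [] q' _ _); [rewrite flip_flip; leq | constructor].
        + simpl in E2. injection E2 as Ea E2. subst a. subst.
          apply (Forall_notin (flip x) (r' ++ x :: l')).
          * exact HF.
          * rewrite flip_flip. apply in_or_app; right; left; auto.
      - subst. refine (Hred r (flip x) l q' _ _); [rewrite flip_flip; leq|].
        apply Forall_app in HF' as [_ H]. exact H. }
    rewrite (f_norem _ _ Hn). subst t. apply equiv_move. exact HF.
  - rewrite (f_norem _ _ Hn). rewrite (f_rem (flip x) (x :: t) [] t).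
    apply equiv_refl. split; auto. rewrite flip_flip; auto.
Qed.


Lemma swap_rem x t1 t2 r s : swap_step I t1 t2 -> removable I x t1 r s ->
  exists r' s', removable I x t2 r' s' /\ (r ++ s = r' ++ s' \/ swap_step I (r ++ s) (r' ++ s')).
Proof.
  intros (u & v & a & b & Hab & -> & ->) [E HF].
  symmetry in E.
  apply app_eq_app in E as [l [[E1 E2]|[E1 E2]]].
  - destruct l as [|c l'].
    + simpl in E2. injection E2 as Ea E2. subst.
      exists (u ++ [b]), v. rewrite app_nil_r in HF. split.
      * split. leq. apply Forall_app; split; auto.
      * left. leq.
    + simpl in E2. injection E2 as Ec E2. subst c.
      destruct l' as [|d l''].
      * simpl in E2. injection E2 as Eb E2. subst.
        exists u, (a :: s). apply Forall_app in HF as [HF _]. split.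
        -- split; auto.
        -- left. leq.
      * simpl in E2. injection E2 as Ed E2. subst d. subst.
        exists (u ++ b :: a :: l''), s.
        apply Forall_app in HF as [HF1 HF2]. inversion HF2; subst. inversion H2; subst.
        split.
        -- split. leq. apply Forall_app; split; auto.
        -- right. exists u, (l'' ++ s), a, b. split; auto. split; leq.
  - destruct l as [|c l'].
    + simpl in E2. injection E2 as Ea E2. subst.
      rewrite app_nil_r. exists (r ++ [b]), v. split.
      * split. leq. apply Forall_app; split; auto.
      * left. leq.
    + simpl in E2. injection E2 as Ec E2. subst.
      exists r, (l' ++ b :: a :: v). split.
      * split. leq. auto.
      * right. exists (r ++ l'), v, a, b. split; auto. split; leq.
Qed.

Lemma f_swap x t1 t2 : swap_step I t1 t2 -> equiv I (f I x t1) (f I x t2).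
Proof.
  intro Hs. destruct (rem_dec x t1) as [(r & q & Hr)|Hn].
  - destruct (swap_rem _ _ _ _ _ Hs Hr) as (r' & s' & Hr' & Hor).
    rewrite (f_rem _ _ _ _ Hr), (f_rem _ _ _ _ Hr').
    destruct Hor as [-> | Hsw]. apply equiv_refl. apply rt_step; auto.
  - destruct (rem_dec x t2) as [(r & q & Hr)|Hn2].
    + exfalso. destruct (swap_rem _ _ _ _ _ (swap_sym _ _ Hs) Hr) as (r' & s' & Hr' & _).
      exact (Hn _ _ Hr').
    + rewrite (f_norem _ _ Hn), (f_norem _ _ Hn2). apply rt_step. apply (swap_app_l [x]). auto.
Qed.

Lemma f_equiv x t1 t2 : equiv I t1 t2 -> equiv I (f I x t1) (f I x t2).
Proof.
  induction 1. apply f_swap; auto. apply equiv_refl. eapply equiv_trans; eauto.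
Qed.

Lemma fold_equiv u T T' : equiv I T T' ->
  equiv I (fold_right (f I) T u) (fold_right (f I) T' u).
Proof. intro H. induction u as [|a u IH]; simpl; auto. apply f_equiv; auto. Qed.

Lemma norem_cons x y t : comm I x y -> (forall r q, ~ removable I x t r q) ->
  forall r q, ~ removable I x (y :: t) r q.
Proof.
  intros Hxy Hn [|c r] q [E HF]; simpl in E; injection E as E1 E2.
  - subst. unfold comm, flip in Hxy; simpl in Hxy. exact (Iirr _ Hxy).
  - inversion HF; subst. apply (Hn r q). split; auto.
Qed.

Lemma c_aux x y t p q : comm I x y -> removable I y t p q ->
  equiv I (f I x (f I y t)) (f I y (f I x t)).
Proof.
  intros Hxy Hr. rewrite (f_rem _ _ _ _ Hr). destruct Hr as [Et HF].
  assert (Hneq : flip y <> flip x).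
  { intro E. unfold comm, flip in *. injection E as E _. rewrite E in Hxy. exact (Iirr _ Hxy). }
  destruct (rem_dec x t) as [(p' & q' & Hr')|Hn].
  - rewrite (f_rem _ _ _ _ Hr'). destruct Hr' as [Et' HF'].
    rewrite Et in Et'. apply app_eq_app in Et' as [l [[E1 E2]|[E1 E2]]].
    + destruct l as [|c l'].
      * simpl in E2. destruct (Hneq (eq_sym (f_equal (hd (flip y)) E2))).
      * simpl in E2. injection E2 as Ec E2. subst c. subst p q'.
        rewrite (f_rem x ((p' ++ flip x :: l') ++ q) p' (l' ++ q)).
        2:{ split; [leq|auto]. }
        apply Forall_app in HF as [HF1 HF2]. inversion HF2; subst.
        rewrite (f_rem y (p' ++ l' ++ flip y :: q) (p' ++ l') q).
        2:{ split; [leq|]. apply Forall_app; auto. }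
        leq. apply equiv_refl.
    + destruct l as [|c l'].
      * simpl in E2. destruct (Hneq (f_equal (hd (flip y)) E2)).
      * simpl in E2. injection E2 as Ec E2. subst c. subst p' q.
        apply Forall_app in HF' as [HF1 HF2]. inversion HF2; subst.
        rewrite (f_rem x (p ++ l' ++ flip x :: q') (p ++ l') q').
        2:{ split; [leq|]. apply Forall_app; auto. }
        rewrite (f_rem y ((p ++ flip y :: l') ++ q') p (l' ++ q')).
        2:{ split; [leq|auto]. }
        leq. apply equiv_refl.
  - rewrite (f_norem _ _ Hn).
    rewrite (f_rem y (x :: t) (x :: p) q).
    2:{ split. subst; reflexivity. constructor; auto. apply comm_sym; auto. }
    assert (Hn2 : forall r s, ~ removable I x (p ++ q) r s).
    { intros r s [E HF2]. apply app_eq_app in E as [l [[E1 E2]|[E1 E2]]].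
      - destruct l as [|c l'].
        + simpl in E2. subst. rewrite app_nil_r in *.
          apply (Hn (r ++ [flip y]) s). split. leq. apply Forall_app; split; auto.
        + simpl in E2. injection E2 as Ec E2. subst.
          apply (Hn r (l' ++ flip y :: q)). split. leq. auto.
      - subst. apply (Hn (p ++ flip y :: l) s). split. leq.
        apply Forall_app in HF2 as [H1 H2]. apply Forall_app; split; auto. }
    rewrite (f_norem _ _ Hn2). apply equiv_refl.
Qed.

Lemma f_comm x y t : comm I x y -> equiv I (f I x (f I y t)) (f I y (f I x t)).
Proof.
  intro Hxy. destruct (rem_dec y t) as [(p & q & Hr)|Hny].
  - eapply c_aux; eauto.
  - destruct (rem_dec x t) as [(p & q & Hr)|Hnx].
    + apply equiv_sym. eapply c_aux; eauto. apply comm_sym; auto.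
    + rewrite (f_norem _ _ Hny), (f_norem _ _ Hnx).
      rewrite (f_norem x (y :: t)). 2: apply norem_cons; auto.
      rewrite (f_norem y (x :: t)). 2: apply norem_cons; auto; apply comm_sym; auto.
      apply (equiv_step [] t x y). auto.
Qed.

Lemma fold_reduced u T : reduced I T -> reduced I (fold_right (f I) T u).
Proof. intro H. induction u; simpl; auto. apply reduced_f; auto. Qed.

Lemma raag_F w w' : raag_eq I w w' ->
  equiv I (fold_right (f I) [] w) (fold_right (f I) [] w').
Proof.
  induction 1.
  - apply equiv_refl.
  - apply equiv_sym; auto.
  - eapply equiv_trans; eauto.
  - rewrite !fold_right_app. apply fold_equiv. simpl.
    pose proof (f_cancel (s, negb b) (fold_right (f I) [] v) (fold_reduced v [] reduced_nil)) as H.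
    unfold flip in H; simpl in H. rewrite negb_involutive in H. exact H.
  - rewrite !fold_right_app. apply fold_equiv. simpl. apply f_comm. exact H.
Qed.

End S.

Section P.
Context {G : group} (glide : G -> Prop) (I : G -> G -> Prop) (D : G -> Prop)
  (o : G -> G -> bool).

Lemma mu_cons2 (a : G) l : l <> [] -> mu o (a :: l) = letter o a (hd a l) :: mu o l.
Proof. destruct l; [congruence|reflexivity]. Qed.

Lemma mu_app p1 (X : G) p2 : mu o (p1 ++ X :: p2) = mu o (p1 ++ [X]) ++ mu o (X :: p2).
Proof.
  induction p1 as [|a p1 IH]; simpl. reflexivity.
  destruct p1 as [|b p1']; simpl. reflexivity.
  simpl in IH. rewrite IH. reflexivity.
Qed.

Lemma is_path_app p1 (X : G) p2 :
  is_path glide D (p1 ++ X :: p2) <-> is_path glide D (p1 ++ [X]) /\ is_path glide D (X :: p2).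
Proof.
  induction p1 as [|a p1 IH]; simpl.
  - split. intro H; split; auto. destruct p2; simpl in H. auto. destruct H as [[H _] _]. exact H. tauto.
  - destruct p1 as [|b p1']; simpl in *.
    + split.
      * intros [H1 H2]. split; [split; [exact H1| destruct H1 as (_ & HX & _); exact HX] | exact H2].
      * intros [[H1 _] H2]. split; assumption.
    + rewrite IH. tauto.
Qed.

Lemma is_path_nonempty p : is_path glide D p -> p <> [].
Proof. destruct p; simpl; [tauto|congruence]. Qed.

Lemma hd_error_app p1 (X Y : G) p2 p3 : hd_error (p1 ++ X :: p2) = hd_error (p1 ++ X :: p3).
Proof. destruct p1; reflexivity. Qed.

Lemma path_split u w p : is_path glide D p -> mu o p = u ++ w ->
  exists p1 X p2, p = p1 ++ X :: p2 /\ mu o (p1 ++ [X]) = u /\ mu o (X :: p2) = w.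
Proof.
  revert p. induction u as [|c u IH]; intros p Hp E.
  - destruct p as [|X p2]; [simpl in Hp; tauto|]. exists [], X, p2. auto.
  - destruct p as [|a rest]; [simpl in Hp; tauto|].
    destruct rest as [|b r]; [discriminate|].
    simpl in E. injection E as Ec E. destruct Hp as [_ Hp].
    destruct (IH (b :: r) Hp E) as (p1 & X & p2 & Ep & Emu & Ew).
    exists (a :: p1), X, p2. split. rewrite Ep. reflexivity. split; auto.
    simpl. destruct p1 as [|d p1']; simpl in *.
    + injection Ep as -> _. subst. reflexivity.
    + injection Ep as -> _. rewrite Emu. subst. reflexivity.
Qed.

Lemma htpy_cons c p q : htpy glide I D p q -> htpy glide I D (c :: p) (c :: q).
Proof.
  induction 1.
  - apply ht_refl.
  - apply ht_sym; auto.
  - eapply ht_trans; eauto.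
  - apply ht_back with (u := c :: u). auto.
  - apply ht_square with (u := c :: u). auto.
Qed.

Lemma letter_cancel X Y Z : letter o Y Z = flip (letter o X Y) -> Z = X.
Proof.
  unfold letter, flip. destruct (o X Y), (o Y Z); simpl; intro E; injection E as E1; try discriminate.
  - apply mulg_cancl in E1. rewrite <- (invK Z), E1, invK. reflexivity.
  - apply mulg_cancr in E1. auto.
Qed.

Lemma letter_det X Y Y' : letter o X Y = letter o X Y' -> Y = Y'.
Proof.
  unfold letter. destruct (o X Y), (o X Y'); simpl; intro E; injection E as E1; try discriminate.
  - apply mulg_cancr in E1. auto.
  - apply mulg_cancl in E1. rewrite <- (invK Y), E1, invK. reflexivity.
Qed.

Lemma path_det p q : is_path glide D p -> is_path glide D q -> hd_error p = hd_error q ->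
  mu o p = mu o q -> p = q.
Proof.
  revert q. induction p as [|X p IH]; intros q Hp Hq Eh Em; [simpl in Hp; tauto|].
  destruct q as [|X' q]; [simpl in Hq; tauto|]. simpl in Eh. injection Eh as <-.
  destruct p as [|Y p], q as [|Y' q]; simpl in Em; try discriminate; auto.
  injection Em as E1 E2. apply letter_det in E1. subst Y'.
  f_equal. apply IH; simpl in *; tauto.
Qed.

Lemma div_mul_inv (a s : G) : mul a (inv (mul s a)) = inv s.
Proof. rewrite invM, mulA, mulgV, mul1g. reflexivity. Qed.


Context (Hgs : gliding_system glide I) (Hor : orientation glide I D o)
  (Hsq : square_condition I D).

Lemma I_sym s t : I s t -> I t s.
Proof. destruct Hgs as (_ & _ & _ & Hi & _). intro H. apply (Hi s t H). Qed.

Lemma I_inv_l s t : I s t -> I (inv s) t.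
Proof. destruct Hgs as (_ & _ & _ & Hi & _). intro H. apply (Hi s t H). Qed.

Lemma I_irr s : ~ I s s.
Proof.
  intro H. destruct Hgs as (_ & _ & _ & _ & Hc).
  destruct (Hc _ _ (I_inv_l _ _ H)) as [_ Hne]. apply Hne. apply mulVg.
Qed.

Lemma I_comm s t : I s t -> mul s t = mul t s.
Proof. destruct Hgs as (_ & _ & _ & _ & Hc). intro H. apply (Hc s t H). Qed.

Lemma I_inv_any a b s t : I a b -> (a = s \/ a = inv s) -> (b = t \/ b = inv t) -> I s t.
Proof.
  intros H Ha Hb.
  assert (H1 : I s b).
  { destruct Ha as [->| ->]; auto. rewrite <- (invK s). apply I_inv_l; auto. }
  apply I_sym. destruct Hb as [->| ->]; auto using I_sym.
  rewrite <- (invK t). apply I_inv_l. apply I_sym. auto.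
Qed.

Lemma square_lift X Y Z : edge glide D X Y -> edge glide D Y Z ->
  comm I (letter o X Y) (letter o Y Z) ->
  exists Y', edge glide D X Y' /\ edge glide D Y' Z /\ letter o X Y' = letter o Y Z /\
    letter o Y' Z = letter o X Y /\
    forall u v, htpy glide I D (u ++ X :: Y :: Z :: v) (u ++ X :: Y' :: Z :: v).
Proof.
  intros [DX [DY gs]] [_ [DZ gt]] Hc.
  assert (HI : I (mul Y (inv X)) (mul Z (inv Y))).
  { unfold comm, letter in Hc.
    destruct (o X Y), (o Y Z); simpl in Hc; eapply I_inv_any; eauto;
      rewrite ?inv_div; auto. }
  assert (EY : Y = mul (mul Y (inv X)) X) by (symmetry; apply mulgKV).
  assert (EZ : Z = mul (mul Z (inv Y)) Y) by (symmetry; apply mulgKV).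
  set (s := mul Y (inv X)) in *. set (t := mul Z (inv Y)) in *.
  clearbody s t. subst Z. subst Y.
  assert (Hst : mul t (mul s X) = mul s (mul t X)).
  { rewrite !mulA, (I_comm _ _ HI). reflexivity. }
  assert (DtX : D (mul t X)).
  { pose proof (Hsq (mul s X) (inv s) t DY (I_inv_l _ _ HI)) as H.
    rewrite mulKg in H. specialize (H DX DZ). rewrite Hst, mulKg in H. exact H. }
  assert (sq : square_in I D X t s).
  { unfold square_in. repeat split; auto. apply I_sym; auto.
    intro E; subst; exact (I_irr _ HI). }
  destruct Hor as [_ Ho]. destruct (Ho X t s sq) as [o1 o2].
  rewrite <- Hst in o2.
  exists (mul t X). split; [|split; [|split; [|split]]].
  - repeat split; auto. rewrite mulgK. exact gt.
  - repeat split; auto. rewrite Hst, mulgK. exact gs.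
  - unfold letter. rewrite o1. destruct (o (mul s X) (mul t (mul s X)));
      rewrite ?mulgK, ?div_mul_inv; reflexivity.
  - unfold letter. rewrite <- o2. destruct (o X (mul s X));
      rewrite ?Hst, ?mulgK, ?div_mul_inv; reflexivity.
  - intros u v. apply ht_sym. apply ht_square. exact sq.
Qed.

Definition liftP (p : list G) (w' : list (G * bool)) :=
  exists p', is_path glide D p' /\ hd_error p' = hd_error p /\ htpy glide I D p p' /\ mu o p' = w'.

Lemma lift_swap p u a b v : is_path glide D p -> mu o p = u ++ a :: b :: v -> comm I a b ->
  liftP p (u ++ b :: a :: v).
Proof.
  intros Hp E Hab.
  destruct (path_split _ _ _ Hp E) as (p1 & X & p2 & -> & E1 & E2).
  destruct p2 as [|Y [|Z p3]]; try discriminate.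
  simpl in E2. injection E2 as Ea Eb Ev. subst a b.
  apply is_path_app in Hp as [Hp1 Hp2].
  destruct Hp2 as [eXY [eYZ Hp3]].
  destruct (square_lift X Y Z eXY eYZ Hab) as (Y' & e1 & e2 & l1 & l2 & Hh).
  exists (p1 ++ X :: Y' :: Z :: p3). split; [|split; [|split]].
  - apply is_path_app. split; auto. simpl. auto.
  - apply hd_error_app; auto.
  - apply Hh.
  - rewrite mu_app, E1. simpl. rewrite l1, l2, Ev. reflexivity.
Qed.

Lemma lift_equiv w w' : equiv I w w' -> forall p, is_path glide D p -> mu o p = w -> liftP p w'.
Proof.
  induction 1 as [w w' Hs| w | w1 w2 w3 H12 IH12 H23 IH23]; intros p Hp E.
  - destruct Hs as (u & v & a & b & Hab & -> & ->). eapply lift_swap; eauto.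
  - exists p. repeat split; auto. apply ht_refl.
  - destruct (IH12 p Hp E) as (p2 & Hp2 & Eh2 & Ht2 & Em2).
    destruct (IH23 p2 Hp2 Em2) as (p3 & Hp3 & Eh3 & Ht3 & Em3).
    exists p3. repeat split; auto. congruence. eapply ht_trans; eauto.
Qed.

Lemma lift_cancel p u x v : is_path glide D p -> mu o p = u ++ x :: flip x :: v -> liftP p (u ++ v).
Proof.
  intros Hp E.
  destruct (path_split _ _ _ Hp E) as (p1 & X & p2 & -> & E1 & E2).
  destruct p2 as [|Y [|Z p3]]; try discriminate.
  simpl in E2. injection E2 as Ea Eb Ev.
  assert (EZ : Z = X). { apply (letter_cancel X Y Z). rewrite Ea, Eb. reflexivity. }
  subst Z.
  apply is_path_app in Hp as [Hp1 Hp2].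
  destruct Hp2 as [eXY [eYX Hp3]].
  exists (p1 ++ X :: p3). split; [|split; [|split]].
  - apply is_path_app. split; auto.
  - apply hd_error_app; auto.
  - apply ht_back. exact eXY.
  - rewrite mu_app, E1. f_equal. exact Ev.
Qed.

Lemma lift_main p : is_path glide D p -> liftP p (fold_right (f I) [] (mu o p)).
Proof.
  induction p as [|X rest IH]; intro Hp; [simpl in Hp; tauto|].
  destruct rest as [|Y r].
  - exists [X]. repeat split; auto. apply ht_refl.
  - destruct Hp as [eXY Hr].
    destruct (IH Hr) as (p0 & Hp0 & Eh0 & Ht0 & Em0).
    destruct p0 as [|Y' r']; [simpl in Hp0; tauto|]. simpl in Eh0. injection Eh0 as ->.
    assert (HpX : is_path glide D (X :: Y :: r')) by (simpl; auto).
    assert (HtX : htpy glide I D (X :: Y :: r) (X :: Y :: r')) by (apply htpy_cons; auto).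
    change (fold_right (f I) [] (mu o (X :: Y :: r))) with (f I (letter o X Y) (fold_right (f I) [] (mu o (Y :: r)))).
    set (x := letter o X Y). set (T := fold_right (f I) [] (mu o (Y :: r))) in *.
    destruct (rem_dec I x T) as [(r0 & q & Hrem)|Hn].
    + rewrite (f_rem I I_irr _ _ _ _ Hrem). destruct Hrem as [ET HF].
      assert (Em : mu o (X :: Y :: r') = x :: r0 ++ flip x :: q).
      { change (mu o (X :: Y :: r')) with (letter o X Y :: mu o (Y :: r')). rewrite Em0, ET. reflexivity. }
      destruct (lift_equiv _ _ (equiv_move I x r0 (flip x :: q) HF) _ HpX Em)
        as (p2 & Hp2 & Eh2 & Ht2 & Em2).
      destruct (lift_cancel p2 r0 x q Hp2 Em2) as (p3 & Hp3 & Eh3 & Ht3 & Em3).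
      exists p3. split; [exact Hp3|split; [rewrite Eh3, Eh2; reflexivity|split; [|exact Em3]]].
      eapply ht_trans; [exact HtX|]. eapply ht_trans; eauto.
    + rewrite (f_norem I _ _ Hn). exists (X :: Y :: r').
      split; [exact HpX|split; [reflexivity|split; [exact HtX|]]].
      change (mu o (X :: Y :: r')) with (letter o X Y :: mu o (Y :: r')). rewrite Em0. reflexivity.
Qed.

End P.

Theorem theorem5p3 (G : group) (glide : G -> Prop) (I : G -> G -> Prop)
  (Hgs : gliding_system glide I)
  (Hbound : bounded_independence glide I)
  (D : G -> Prop) (o : G -> G -> bool)
  (Hor : orientation glide I D o)
  (Hreg : regular glide I D)
  (Hsq : square_condition I D) :
  forall A : G, D A ->
  forall p q : list G, loop_at glide D A p -> loop_at glide D A q ->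
    raag_eq I (mu o p) (mu o q) -> htpy glide I D p q.
Proof.
  intros A DA p q [Hp [Ehp _]] [Hq [Ehq _]] Hr.
  pose proof (raag_F I (I_irr glide I Hgs) (I_sym glide I Hgs) _ _ Hr) as HF.
  destruct (lift_main glide I D o Hgs Hor Hsq p Hp) as (p' & Hp' & Eh' & Ht' & Em').
  destruct (lift_main glide I D o Hgs Hor Hsq q Hq) as (q' & Hq' & Ehq' & Htq' & Emq').
  rewrite <- Em', <- Emq' in HF.
  destruct (lift_equiv glide I D o Hgs Hor Hsq _ _ HF p' Hp' eq_refl)
    as (p'' & Hp'' & Eh'' & Ht'' & Em'').
  assert (E : p'' = q').
  { eapply path_det; eauto.
    rewrite Eh'', Eh', Ehq'.
    destruct p; [simpl in Hp; tauto|]. destruct q; [simpl in Hq; tauto|].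
    simpl in *. congruence. }
  subst q'.
  eapply ht_trans; [exact Ht'|]. eapply ht_trans; [exact Ht''|]. apply ht_sym. exact Htq'.
Qed.
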